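(* Let $\rho$ be a subnormalized state and $\Gamma$ positive semidefinite, let $\mathcal M^\infty$ be as below, $q\ge0$, $\eta\in(0,\operatorname{tr}\rho]$, $g\in(0,1)$. If $\mathcal M^\infty$ is $q$-quasiuniversal with respect to $\Gamma$, then with $\eta_g=(1-g)\eta+g\operatorname{tr}\rho$, $$D^\eta_H(\rho\|\Gamma)\ge D^{\infty,\eta}_H(\rho\|\Gamma)\ge D^{\eta_g}_H(\rho\|\Gamma)-q-\log\frac{\operatorname{tr}\rho}{g\eta}.$$ If $\mathcal M^\infty$ is $q$-quasiuniversal with respect to $\mathbb 1$, then $H^\eta_H(\rho)\le H^{\infty,\eta}_H(\rho)\le H^{\eta_g}_H(\rho)+q+\log\frac{\operatorname{tr}\rho}{g\eta}$.
   Context: Natural logarithms; subnormalized state = positive semidefinite with trace $\le1$; POVM effect = $0\le Q\le\mathbb 1$. $\{\mathcal M^r\}_{r\ge0}$ is a family of sets of POVM effects on the system with $\mathbb 1\in\mathcal M^0$ and $\mathcal M^r\subseteq\mathcal M^{r'}$ for $r\le r'$; $\mathcal M^\infty$ is the topological closure of $\bigcup_{r\ge0}\mathcal M^r$. $D^{\infty,\eta}_H(\rho\|\Gamma)=-\log\inf\{\operatorname{tr}(Q\Gamma)/\operatorname{tr}(Q\rho): Q\in\mathcal M^\infty,\operatorname{tr}(Q\rho)\ge\eta\}$ and $H^{\infty,\eta}_H(\rho)=-D^{\infty,\eta}_H(\rho\|\mathbb 1)$. Hypothesis-testing relative entropy $D^\eta_H(\rho\|\Gamma)=-\log\min\{\operatorname{tr}(Q\Gamma)/\eta: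 0\le Q\le\mathbb 1,\operatorname{tr}(Q\rho)\ge\eta\}$, $H^\eta_H(\rho)=-D^\eta_H(\rho\|\mathbb 1)$. $\mathcal M^\infty$ is $q$-quasiuniversal with respect to $\Gamma$ if for every POVM effect $Q$ with $\|Q\|_\infty=1$ and every $g\in(0,1)$ there exist $\tilde Q,\tilde Q'\in\mathcal M^\infty$ with $g\tilde Q\le Q\le(1-g)\tilde Q'+g\mathbb 1$ and $\log\operatorname{tr}(\tilde Q'\Gamma)-\log\operatorname{tr}(\tilde Q\Gamma)\le q$. *)

(* Defs.v *)
From HB Require Import structures.
From mathcomp Require Import all_boot all_order all_algebra.
From mathcomp Require Import complex.
From mathcomp Require Import all_classical all_reals all_analysis.
Set Implicit Arguments. Unset Strict Implicit. Unset Printing Implicit Defensive.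
Import Order.TTheory GRing.Theory Num.Theory.
Local Open Scope ring_scope.
Local Open Scope classical_set_scope.

Section QDefs.
Variables (R : realType) (n : nat).
Local Notation C := (R[i]).
Local Notation mx := ('M[C]_n).

Definition adjmx (m p : nat) (A : 'M[C]_(m, p)) : 'M[C]_(p, m) :=
  map_mx (fun z => (z^*)%C) A^T.

Definition psd (A : mx) : Prop :=
  A = adjmx A /\ forall v : 'cV[C]_n, 0 <= (adjmx v *m A *m v) 0 0.

Definition loewner (A B : mx) : Prop := psd (B - A).

(* real trace (traces below are traces of products of psd operators, hence real) *)
Definition trR (A : mx) : R := complex.Re (\tr A).

Definition subnormalized (rho : mx) : Prop := psd rho /\ trR rho <= 1.

Definition effect (Q : mx) : Prop := psd Q /\ loewner Q 1%:M.

Definition cabs (z : C) : R := Num.sqrt (complex.Re z ^+ 2 + complex.Im z ^+ 2).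

Definition vnorm (v : 'cV[C]_n) : R := Num.sqrt (\sum_i cabs (v i 0) ^+ 2).

Definition opnorm (Q : mx) : R :=
  sup [set vnorm (Q *m v) | v in [set v : 'cV[C]_n | vnorm v = 1]].

Definition mx_closure (S : set mx) : set mx :=
  [set Q | forall e : R, 0 < e ->
     exists2 Q', S Q' & forall i j, cabs (Q i j - Q' i j) < e].

Definition Minf (M : R -> set mx) : set mx :=
  mx_closure (\bigcup_(r in [set r : R | 0 <= r]) M r).

Definition nlog (x : R) : \bar R := if x == 0 then +oo%E else (- ln x)%:E.
Definition elog (x : R) : \bar R := if x == 0 then -oo%E else (ln x)%:E.

Definition DH (eta : R) (rho Gam : mx) : \bar R :=
  nlog (inf [set trR (Q *m Gam) / eta | Q in
              [set Q | effect Q /\ eta <= trR (Q *m rho)]]).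

Definition DHinf (M : R -> set mx) (eta : R) (rho Gam : mx) : \bar R :=
  nlog (inf [set trR (Q *m Gam) / trR (Q *m rho) | Q in
              [set Q | Minf M Q /\ eta <= trR (Q *m rho)]]).

Definition HH (eta : R) (rho : mx) : \bar R := (- DH eta rho 1%:M)%E.
Definition HHinf (M : R -> set mx) (eta : R) (rho : mx) : \bar R :=
  (- DHinf M eta rho 1%:M)%E.

Definition quasiuniversal (M : R -> set mx) (q : R) (Gam : mx) : Prop :=
  forall Q : mx, effect Q -> opnorm Q = 1 ->
  forall g : R, 0 < g < 1 ->
  exists Qt Qt' : mx,
    [/\ Minf M Qt, Minf M Qt',
        loewner (g%:C%C *: Qt) Q,
        loewner Q ((1 - g)%:C%C *: Qt' + g%:C%C *: 1%:M)
      & (elog (trR (Qt' *m Gam)) - elog (trR (Qt *m Gam)) <= q%:E)%E].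

End QDefs.

(* Main.v *)
Require Import Defs.
From HB Require Import structures.
From mathcomp Require Import all_boot all_order all_algebra.
From mathcomp Require Import complex spectral sesquilinear ring lra.
From mathcomp Require Import all_classical all_reals all_analysis.
Import Order.TTheory GRing.Theory Num.Theory.
Local Open Scope ring_scope.
Local Open Scope classical_set_scope.
Set Implicit Arguments. Unset Strict Implicit.

Section H1.
Variables (R : realType) (n : nat).
Local Notation C := (R[i]).
Local Notation mx := ('M[C]_n).

Lemma adjmxE m p (A : 'M[C]_(m, p)) : adjmx A = (A ^t Num.conj_op)%sesqui.
Proof. by []. Qed.

Lemma spec (A : mx) : A = adjmx A -> exists (P : mx) (d : 'rV[C]_n),
  [/\ P *m adjmx P = 1%:M, adjmx P *m P = 1%:M & A = adjmx P *m diag_mx d *m P].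
Proof.
move=> hA.
have hh : A \is hermsymmx by apply/is_hermitianmxP; rewrite expr0 scale1r.
have /orthomx_spectralP eA := hermitian_normalmx hh.
have uP := spectral_unitarymx A.
exists (spectralmx A), (spectral_diag A); split.
- by apply/unitarymxP.
- by rewrite adjmxE -invmx_unitary // mulVmx // spectral_unit.
- by rewrite adjmxE -invmx_unitary.
Qed.
End H1.
Arguments spec {R n A}.

Section H2.
Variables (R : realType) (n : nat).
Local Notation C := (R[i]).
Local Notation mx := ('M[C]_n).

Lemma adjmx_mul m p r (A : 'M[C]_(m, p)) (B : 'M[C]_(p, r)) :
  adjmx (A *m B) = adjmx B *m adjmx A.
Proof. by rewrite !adjmxE trmx_mul map_mxM. Qed.

Lemma adjmxK m p (A : 'M[C]_(m, p)) : adjmx (adjmx A) = A.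
Proof. by rewrite !adjmxE trmxCK. Qed.

Lemma adjmx_diag (d : 'rV[C]_n) : (forall k, 0 <= d 0 k) ->
  adjmx (diag_mx d) = diag_mx d.
Proof.
move=> hd; rewrite adjmxE; apply/matrixP=> i j; rewrite !mxE.
case: (eqVneq i j) => [->|ne]; last by rewrite /= mulr0n conjC0.
by rewrite /= mulr1n; apply: conj_Creal; apply: ger0_real.
Qed.

Lemma quad_diag (d : 'rV[C]_n) (w : 'cV[C]_n) :
  (adjmx w *m diag_mx d *m w) 0 0 = \sum_k (w k 0)^* * d 0 k * w k 0.
Proof.
rewrite mul_mx_diag !mxE; apply: eq_bigr => k _; rewrite !mxE.
by [].
Qed.

Lemma psd_diag (P : mx) (d : 'rV[C]_n) : (forall k, 0 <= d 0 k) ->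
  psd (adjmx P *m diag_mx d *m P).
Proof.
move=> hd; split.
  by rewrite !adjmx_mul adjmxK adjmx_diag // mulmxA.
move=> v; rewrite -!mulmxA mulmxA -adjmx_mul mulmxA quad_diag.
apply: sumr_ge0 => k _; rewrite mulrC mulrA; apply: mulr_ge0 => //.
rewrite -normCK; exact: exprn_ge0.
Qed.

Lemma diag_entry (M : mx) k :
  (row k (1%:M : mx) *m M *m adjmx (row k (1%:M : mx))) 0 0 = M k k.
Proof.
rewrite -row_mul mul1mx.
have -> : adjmx (row k (1%:M : mx)) = col k 1%:M.
  rewrite adjmxE; apply/matrixP=> i j; rewrite !mxE.
  by rewrite eq_sym; case: (i == k); rewrite ?conjC1 ?conjC0.
by rewrite colE mul1mx -colE !mxE.
Qed.

Lemma eig_ge0 (A P : mx) d : psd A -> P *m adjmx P = 1%:M ->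
  A = adjmx P *m diag_mx d *m P -> forall k, 0 <= d 0 k.
Proof.
move=> [_ hA] hP eA k.
have := hA (adjmx (row k P)).
have e1 : P *m adjmx (row k P) = adjmx (row k 1%:M).
  by rewrite -[P in P *m _]adjmxK -adjmx_mul -row_mul hP.
rewrite adjmxK eA !mulmxA -row_mul hP -mulmxA e1 diag_entry.
by rewrite mxE eqxx mulr1n.
Qed.

Lemma tr_psd (X A : mx) : psd X -> psd A -> 0 <= \tr (X *m A).
Proof.
move=> hX hA; have [P [d [hP hP' eA]]] := spec hA.1.
have hd := eig_ge0 hA hP eA.
rewrite eA !mulmxA mxtrace_mulC !mulmxA mul_mx_diag.
rewrite /mxtrace; apply: sumr_ge0 => k _.
rewrite mxE; apply: mulr_ge0 => //.
rewrite -diag_entry -!mulmxA -adjmx_mul !mulmxA -row_mul mul1mx.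
by have := hX.2 (adjmx (row k P)); rewrite adjmxK.
Qed.
End H2.

Section H3.
Variables (R : realType) (n : nat).
Local Notation C := (R[i]).
Local Notation mx := ('M[C]_n).
Local Notation "x %:CC" := (real_complex R x) (at level 2).

Lemma ge0_real (z : C) : 0 <= z -> z = (complex.Re z)%:CC.
Proof.
case: z => a b; rewrite lecE /= => /andP[/eqP hb _].
by rewrite hb.
Qed.

Lemma trR_ge0 (X A : mx) : psd X -> psd A -> 0 <= trR (X *m A).
Proof.
move=> hX hA; have := tr_psd hX hA; rewrite lecE => /andP[_].
by rewrite /trR.
Qed.

Lemma ReD (x y : C) : complex.Re (x + y) = complex.Re x + complex.Re y.
Proof. by case: x => a b; case: y => c d. Qed.
Lemma ReN (x : C) : complex.Re (- x) = - complex.Re x.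
Proof. by case: x => a b. Qed.
Lemma ReM (r : R) (x : C) : complex.Re (r%:CC * x) = r * complex.Re x.
Proof. by case: x => a b /=; rewrite !mul0r subr0. Qed.

Lemma trRD (A B X : mx) : trR ((A + B) *m X) = trR (A *m X) + trR (B *m X).
Proof. by rewrite /trR mulmxDl mxtraceD ReD. Qed.
Lemma trRN (A X : mx) : trR ((- A) *m X) = - trR (A *m X).
Proof. by rewrite /trR mulNmx raddfN ReN. Qed.
Lemma trRB (A B X : mx) : trR ((A - B) *m X) = trR (A *m X) - trR (B *m X).
Proof. by rewrite trRD trRN. Qed.
Lemma trRZ (r : R) (A X : mx) : trR ((r%:CC *: A) *m X) = r * trR (A *m X).
Proof. by rewrite /trR -scalemxAl mxtraceZ ReM. Qed.
Lemma trR1 (X : mx) : trR (1%:M *m X) = trR X.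
Proof. by rewrite mul1mx. Qed.

Lemma loewner_trR (A B X : mx) : loewner A B -> psd X ->
  trR (A *m X) <= trR (B *m X).
Proof.
move=> hAB hX; have := trR_ge0 hAB hX.
by rewrite trRB subr_ge0.
Qed.

Lemma effect_spec (Q : mx) : effect Q -> exists (P : mx) (e : 'I_n -> R),
  [/\ P *m adjmx P = 1%:M, adjmx P *m P = 1%:M,
      Q = adjmx P *m diag_mx (\row_k (e k)%:CC) *m P
    & forall k, 0 <= e k <= 1].
Proof.
move=> [hQ h1Q].
have [P [d [hP hP' eQ]]] := spec hQ.1.
have hd := eig_ge0 hQ hP eQ.
have ed : d = \row_k (complex.Re (d 0 k))%:CC.
  by apply/rowP => k; rewrite mxE -ge0_real.
exists P, (fun k => complex.Re (d 0 k)); split => //; first by rewrite -ed.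
move=> k; apply/andP; split.
  by have := hd k; rewrite lecE => /andP[_].
have e1 : (1%:M : mx) - Q = adjmx P *m diag_mx (const_mx 1 - d) *m P.
  by rewrite linearB /= diag_const_mx mulmxBr mulmxBl mulmx1 hP' eQ.
have := eig_ge0 h1Q hP e1 k.
rewrite !mxE lecE => /andP[_] /=.
by rewrite ReD ReN subr_ge0.
Qed.

End H3.

Section H4.
Variables (R : realType) (n : nat).
Local Notation C := (R[i]).
Local Notation mx := ('M[C]_n).
Local Notation "x %:CC" := (real_complex R x) (at level 2).

Definition ssq (u : 'cV[C]_n) : R := \sum_i cabs (u i 0) ^+ 2.

Lemma ssq_C u : (ssq u)%:CC = (adjmx u *m u) 0 0.
Proof.
rewrite /ssq mxE rmorph_sum; apply: eq_bigr => i _.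
rewrite rmorphXn /= adjmxE !mxE.
have -> : (cabs (u i 0))%:CC = `|u i 0| by rewrite normc_def.
by rewrite normCKC.
Qed.

Lemma ssq_ge0 u : 0 <= ssq u.
Proof. by apply: sumr_ge0 => i _; apply: exprn_ge0; apply: sqrtr_ge0. Qed.

Lemma vnorm1 u : (vnorm u = 1) <-> (ssq u = 1).
Proof.
rewrite /vnorm -/(ssq u); split; last by move=> ->; rewrite sqrtr1.
by move=> h; rewrite -(sqr_sqrtr (ssq_ge0 u)) h expr1n.
Qed.

Lemma vnorm_le1 u : ssq u <= 1 -> vnorm u <= 1.
Proof. by move=> h; rewrite /vnorm -/(ssq u) -sqrtr1 ler_sqrt. Qed.

Lemma ssq_unitary (P : mx) v : adjmx P *m P = 1%:M -> ssq (P *m v) = ssq v.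
Proof.
move=> hP; apply: (@complexI R); rewrite !ssq_C adjmx_mul.
by rewrite mulmxA -[adjmx v *m _ *m P]mulmxA hP mulmx1.
Qed.

Lemma adj_row1 k : adjmx (row k (1%:M : mx)) = col k 1%:M.
Proof.
rewrite adjmxE; apply/matrixP=> i j; rewrite !mxE.
by rewrite eq_sym; case: (i == k); rewrite ?conjC1 ?conjC0.
Qed.

Lemma diag_row (e : 'I_n -> R) : forall k, 0 <= (\row_k (e k)%:CC : 'rV[C]_n) 0 k <-> 0 <= e k.
Proof. by move=> k; rewrite mxE ler0c. Qed.

Lemma ssq_diag (P : mx) (e : 'I_n -> R) v :
  P *m adjmx P = 1%:M -> (forall k, 0 <= e k) ->
  (ssq ((adjmx P *m diag_mx (\row_k (e k)%:CC) *m P) *m v))%:CC =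
  \sum_k (e k ^+ 2)%:CC * ((P *m v) k 0)^* * ((P *m v) k 0).
Proof.
move=> hP he; set D := diag_mx _.
have hd : forall k, 0 <= (\row_k (e k)%:CC : 'rV[C]_n) 0 k by move=> k; rewrite diag_row.
rewrite ssq_C adjmx_mul.
have := (psd_diag P hd).1 => <-.
have -> : adjmx v *m (adjmx P *m D *m P) *m (adjmx P *m D *m P *m v)
   = adjmx (P *m v) *m (D *m D) *m (P *m v).
  rewrite adjmx_mul !mulmxA; congr (_ *m _).
  rewrite -!mulmxA; congr (_ *m _); congr (_ *m _); congr (_ *m _).
  by rewrite !mulmxA hP mul1mx.
rewrite mulmx_diag quad_diag; apply: eq_bigr => k _.
rewrite !mxE rmorphXn /= expr2; congr (_ * _); exact: mulrC.
Qed.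

Lemma ssq_bound (P : mx) (e : 'I_n -> R) v :
  P *m adjmx P = 1%:M -> adjmx P *m P = 1%:M -> (forall k, 0 <= e k <= 1) ->
  ssq ((adjmx P *m diag_mx (\row_k (e k)%:CC) *m P) *m v) <= ssq v.
Proof.
move=> hP hP' he.
have he0 : forall k, 0 <= e k by move=> k; have /andP[] := he k.
rewrite -lecR ssq_diag // -(ssq_unitary v hP') ssq_C mxE.
apply: ler_sum => k _; rewrite adjmxE !mxE -mulrA.
apply: ler_piMl; first by rewrite -normCKC exprn_ge0.
rewrite -(rmorph1 (real_complex R)) lecR.
by have /andP[h0 h1] := he k; apply: exprn_ile1.
Qed.

Lemma eigvec (P : mx) (e : 'I_n -> R) k :
  P *m adjmx P = 1%:M ->
  ssq (adjmx (row k P)) = 1 /\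
  (adjmx P *m diag_mx (\row_k (e k)%:CC) *m P) *m adjmx (row k P)
     = (e k)%:CC *: adjmx (row k P).
Proof.
move=> hP.
have e1 : P *m adjmx (row k P) = col k 1%:M.
  by rewrite -[P in P *m _]adjmxK -adjmx_mul -row_mul hP adj_row1.
split.
  apply: (@complexI R); rewrite ssq_C adjmxK rmorph1.
  have -> : row k P *m adjmx (row k P) = row k 1%:M *m (P *m adjmx (row k P)).
    by rewrite mulmxA -[row k 1%:M *m P]row_mul mul1mx.
  rewrite e1 -adj_row1 -{1}[row k 1%:M]mulmx1 diag_entry mxE eqxx.
  by [].
rewrite -mulmxA e1 -mulmxA.
have -> : diag_mx (\row_k (e k)%:CC) *m col k (1%:M : mx) = (e k)%:CC *: col k 1%:M.
  apply/matrixP => i j; rewrite mul_diag_mx !mxE.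
  case hik: (i == k); last by rewrite !mulr0.
  by rewrite (eqP hik).
rewrite -scalemxAr -adj_row1 -adjmx_mul -row_mul mul1mx.
by [].
Qed.
End H4.

Section H5.
Variables (R : realType) (n : nat).
Local Notation C := (R[i]).
Local Notation mx := ('M[C]_n).
Local Notation "x %:CC" := (real_complex R x) (at level 2).

Lemma opnorm_one (P : mx) (e : 'I_n -> R) k0 :
  P *m adjmx P = 1%:M -> adjmx P *m P = 1%:M -> (forall k, 0 <= e k <= 1) ->
  e k0 = 1 -> opnorm (adjmx P *m diag_mx (\row_k (e k)%:CC) *m P) = 1.
Proof.
move=> hP hP' he hk0; rewrite /opnorm.
set Q := adjmx P *m _ *m P.
set S := [set _ | _ in _].
have S1 : S 1.
  have [h1 h2] := eigvec e k0 hP.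
  exists (adjmx (row k0 P)); first by apply/vnorm1.
  by rewrite /Q h2 hk0 rmorph1 scale1r; apply/vnorm1.
have ub : ubound S 1.
  move=> y [v hv <-]; apply: vnorm_le1.
  by rewrite -((vnorm1 v).1 hv); apply: ssq_bound.
apply/le_anti/andP; split; first by apply: ge_sup => //; exists 1.
by apply: ub_le_sup => //; exists 1.
Qed.

Lemma sub_diag (P : mx) (f : 'I_n -> R) c : adjmx P *m P = 1%:M ->
  c%:CC *: 1%:M - adjmx P *m diag_mx (\row_k (f k)%:CC) *m P
  = adjmx P *m diag_mx (\row_k (c - f k)%:CC) *m P.
Proof.
move=> hP'.
have -> : \row_k (c - f k)%:CC = c%:CC *: const_mx 1 - \row_k (f k)%:CC :> 'rV[C]_n.
  by apply/rowP => k; rewrite !mxE rmorphB /= mulr1.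
rewrite linearB linearZ /= diag_const_mx mulmxBr mulmxBl.
by rewrite -scalemxAr mulmx1 -scalemxAl hP'.
Qed.


Lemma normalize (Q rho : mx) : effect Q -> 0 < trR (Q *m rho) ->
  exists m : R, [/\ 0 < m <= 1, effect (m^-1%:CC *: Q),
     opnorm (m^-1%:CC *: Q) = 1 & loewner Q (m%:CC *: 1%:M)].
Proof.
move=> hQ htr.
have [P [e [hP hP' eQ he]]] := effect_spec hQ.
have he0 : forall k, 0 <= e k by move=> k; have /andP[] := he k.
case: (pickP (fun _ : 'I_n => true)) => [k0 _ | h0]; last first.
  by move: htr; rewrite /trR /mxtrace big_pred0 // ltxx.
have [km _ hmax] := @arg_maxP _ _ _ k0 xpredT e isT.
set m := e km in hmax.
have {}hmax : forall k, e k <= m by move=> k; exact: hmax.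
have m0 : 0 < m.
  rewrite lt_def he0 andbT; apply/eqP => m0.
  have ez : \row_k (e k)%:CC = 0 :> 'rV[C]_n.
    apply/rowP => k; rewrite !mxE.
    have -> : e k = 0 by apply/le_anti; rewrite he0 -m0 hmax.
    by rewrite rmorph0.
  by move: htr; rewrite eQ ez linear0 mulmx0 mul0mx mul0mx /trR mxtrace0 ltxx.
have m1 : m <= 1 by have /andP[] := he km.
have eQ1 : m^-1%:CC *: Q = adjmx P *m diag_mx (\row_k (e k / m)%:CC) *m P.
  rewrite eQ scalemxAl scalemxAr; congr (_ *m _ *m _).
  rewrite -linearZ /=; congr diag_mx; apply/rowP => k.
  by rewrite !mxE rmorphM /= mulrC.
have he1 : forall k, 0 <= e k / m <= 1.
  move=> k; apply/andP; split; first by apply: divr_ge0 => //; apply: ltW.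
  by rewrite ler_pdivrMr // mul1r hmax.
exists m; split.
- by rewrite m0 m1.
- rewrite eQ1; split; first by apply: psd_diag => k; rewrite mxE ler0c; have /andP[] := he1 k.
  rewrite /loewner -[1%:M]scale1r -(rmorph1 (real_complex R)) sub_diag //.
  by apply: psd_diag => k; rewrite mxE ler0c subr_ge0; have /andP[] := he1 k.
- rewrite eQ1; apply: (opnorm_one (k0 := km)) => //.
  by rewrite divff // gt_eqF.
- rewrite /loewner eQ sub_diag //.
  by apply: psd_diag => k; rewrite mxE ler0c subr_ge0 hmax.
Qed.

End H5.

Section H6.
Variables (R : realType) (n : nat).
Local Notation C := (R[i]).
Local Notation mx := ('M[C]_n).
Local Notation "x %:CC" := (real_complex R x) (at level 2).

Lemma cabsE (z : C) : (cabs z)%:CC = `|z|.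
Proof. by rewrite normc_def. Qed.

Lemma cabs_ge0 (z : C) : 0 <= cabs z.
Proof. exact: sqrtr_ge0. Qed.

Lemma cabs_Re (z : C) : `|complex.Re z| <= cabs z.
Proof.
rewrite /cabs -sqrtr_sqr ler_sqrt; last by rewrite addr_ge0 // sqr_ge0.
by rewrite lerDl sqr_ge0.
Qed.

Lemma cabs_Im (z : C) : `|complex.Im z| <= cabs z.
Proof.
rewrite /cabs -sqrtr_sqr ler_sqrt; last by rewrite addr_ge0 // sqr_ge0.
by rewrite lerDr sqr_ge0.
Qed.

Lemma ImD (x y : C) : complex.Im (x + y) = complex.Im x + complex.Im y.
Proof. by case: x => a b; case: y => c d. Qed.
Lemma ImN (x : C) : complex.Im (- x) = - complex.Im x.
Proof. by case: x => a b. Qed.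

Lemma small_ge0 (x : R) : (forall e, 0 < e -> - x <= e) -> 0 <= x.
Proof.
move=> h; rewrite -oppr_le0; apply/ler_addgt0Pr => e he.
by rewrite add0r; apply: h.
Qed.

Lemma closed_eq0 (z : C) : (forall e, 0 < e -> cabs z <= e) -> z = 0.
Proof.
move=> h; apply/normr0_eq0; rewrite -cabsE.
have -> : cabs z = 0.
  apply/le_anti; rewrite cabs_ge0 andbT; apply/ler_addgt0Pr => e he.
  by rewrite add0r; apply: h.
by rewrite rmorph0.
Qed.

Lemma closed_ge0 (z : C) :
  (forall e, 0 < e -> exists w : C, 0 <= w /\ cabs (z - w) <= e) -> 0 <= z.
Proof.
move=> h; rewrite lecE; apply/andP; split.
  suff : complex.Im z = 0 by move=> ->.
  apply/normr0_eq0/le_anti; rewrite normr_ge0 andbT.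
  apply/ler_addgt0Pr => e he; rewrite add0r.
  have [w [hw hzw]] := h e he.
  have := cabs_Im (z - w); move: hw; rewrite lecE => /andP[/eqP hw _].
  have -> : complex.Im (z - w) = complex.Im z.
    by rewrite ImD ImN hw /= oppr0 addr0.
  by move=> h1; apply: le_trans h1 hzw.
apply: small_ge0 => e he.
have [w [hw hzw]] := h e he.
have := cabs_Re (z - w); move: hw; rewrite lecE => /andP[_ hw].
rewrite ReD ReN => h1.
have h2 := le_trans h1 hzw.
have h3 : - (complex.Re z - complex.Re w) <= e.
  by apply: le_trans h2; rewrite ler_normr lexx orbT.
apply: le_trans h3; rewrite opprB addrC lerDl.
by move: hw.
Qed.

Definition Kv (v : 'cV[C]_n) : R := \sum_j \sum_i cabs (v i 0) * cabs (v j 0).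

Lemma Kv_ge0 v : 0 <= Kv v.
Proof. by apply: sumr_ge0 => j _; apply: sumr_ge0 => i _; apply: mulr_ge0; apply: cabs_ge0. Qed.

Lemma quad_bound (v : 'cV[C]_n) (D : mx) (e : R) :
  (forall i j, cabs (D i j) <= e) ->
  cabs ((adjmx v *m D *m v) 0 0) <= e * Kv v.
Proof.
move=> hD.
have h : `|(adjmx v *m D *m v) 0 0| <= \sum_j \sum_i `|v i 0| * e%:CC * `|v j 0|.
  rewrite mxE; apply: le_trans (ler_norm_sum _ _ _) _; apply: ler_sum => j _.
  rewrite normrM mxE -mulr_suml; apply: ler_wpM2r; first exact: normr_ge0.
  apply: le_trans (ler_norm_sum _ _ _) _; apply: ler_sum => i _.
  rewrite normrM adjmxE !mxE norm_conjC; apply: ler_wpM2l; first exact: normr_ge0.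
  by rewrite -cabsE lecR.
rewrite -lecR cabsE; apply: le_trans h _.
rewrite rmorphM /= /Kv rmorph_sum mulr_sumr; rewrite le_eqVlt; apply/orP; left; apply/eqP; apply: eq_bigr => j _.
rewrite rmorph_sum mulr_sumr; apply: eq_bigr => i _.
by rewrite rmorphM /= !cabsE mulrCA mulrA.
Qed.

Lemma cabsB (x y : C) : cabs (x - y) <= cabs x + cabs y.
Proof. by rewrite -lecR rmorphD /= !cabsE ler_normB. Qed.

Lemma cabs_sym (x y : C) : cabs (x - y) = cabs (y - x).
Proof. by apply: (@complexI R); rewrite !cabsE distrC. Qed.

Lemma clos_psd (S : set mx) (Q : mx) : S `<=` @psd R n -> mx_closure S Q -> psd Q.
Proof.
move=> hS hQ; split.
  apply/matrixP => i j; rewrite adjmxE mxE mxE.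
  apply/eqP; rewrite -subr_eq0; apply/eqP; apply: closed_eq0 => e he.
  have he2 : 0 < e / 2 by rewrite divr_gt0.
  have [Q' /hS [hQ' _] hd] := hQ _ he2.
  have hQ'ij : Q' i j = (Q' j i)^* by rewrite {1}hQ' adjmxE !mxE.
  have -> : Q i j - (Q j i)^* = (Q i j - Q' i j) - (Q j i - Q' j i)^*.
    by rewrite rmorphB /= hQ'ij; ring.
  apply: le_trans (cabsB _ _) _.
  have -> : cabs ((Q j i - Q' j i)^*) = cabs (Q j i - Q' j i).
    by apply: (@complexI R); rewrite !cabsE norm_conjC.
  by rewrite (splitr e) lerD // ltW.
move=> v; apply: closed_ge0 => e he.
have hK : 0 < Kv v + 1 by rewrite ltr_wpDl // Kv_ge0.
have hd0 : 0 < e / (Kv v + 1) by rewrite divr_gt0.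
have [Q' /hS [_ hQ'] hd] := hQ _ hd0.
exists ((adjmx v *m Q' *m v) 0 0); split; first exact: hQ'.
have -> : (adjmx v *m Q *m v) 0 0 - (adjmx v *m Q' *m v) 0 0
   = (adjmx v *m (Q - Q') *m v) 0 0.
  rewrite mulmxBr mulmxBl; set A := adjmx v *m Q *m v; set B := adjmx v *m Q' *m v.
  by rewrite !mxE.
apply: le_trans (quad_bound (e := e / (Kv v + 1)) _ _) _.
  by move=> i j; rewrite mxE mxE ltW.
rewrite mulrAC ler_pdivrMr // ler_wpM2l //; first exact: ltW.
by rewrite lerDl.
Qed.

Lemma clos_effect (S : set mx) (Q : mx) : S `<=` @effect R n -> mx_closure S Q -> effect Q.
Proof.
move=> hS hQ; split.
  by apply: (clos_psd (S := S)) => // X /hS [].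
apply: (clos_psd (S := [set 1%:M - X | X in S])).
  by move=> _ [X /hS [_ hX] <-].
move=> e he; have [Q' hQ' hd] := hQ e he.
exists (1%:M - Q'); first by exists Q'.
move=> i j; rewrite !mxE.
have -> : (i == j)%:R - Q i j - ((i == j)%:R - Q' i j) = Q' i j - Q i j :> C by ring.
by rewrite cabs_sym hd.
Qed.

Lemma Minf_effect (M : R -> set mx) :
  (forall r : R, 0 <= r -> M r `<=` @effect R n) -> Minf M `<=` @effect R n.
Proof.
move=> hM Q hQ; apply: (clos_effect (S := \bigcup_(r in [set r : R | 0 <= r]) M r)) => //.
by move=> X [r hr hX]; exact: hM r hr X hX.
Qed.

End H6.

Section Main.
Variables (R : realType) (n : nat).
Local Notation C := (R[i]).
Local Notation mx := ('M[C]_n).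
Local Notation "x %:CC" := (real_complex R x) (at level 2).

Lemma psd1 : psd (1%:M : mx).
Proof.
split; first by rewrite adjmxE trmx1 map_mx1.
by move=> v; rewrite mulmx1 -ssq_C ler0c ssq_ge0.
Qed.

Lemma psd0 : psd (0 : mx).
Proof.
split; first by rewrite adjmxE trmx0 map_mx0.
by move=> v; rewrite mulmx0 mul0mx mxE.
Qed.

Lemma effect1 : effect (1%:M : mx).
Proof. by split; [exact: psd1 | rewrite /loewner subrr; exact: psd0]. Qed.

Lemma scale_diag (P : mx) (e : 'I_n -> R) c :
  c%:CC *: (adjmx P *m diag_mx (\row_k (e k)%:CC) *m P)
  = adjmx P *m diag_mx (\row_k (c * e k)%:CC) *m P.
Proof.
rewrite scalemxAl scalemxAr; congr (_ *m _ *m _).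
rewrite -linearZ /=; congr diag_mx; apply/rowP => k.
by rewrite !mxE rmorphM.
Qed.

Lemma scale_effect (Q : mx) c : effect Q -> 0 <= c <= 1 -> effect (c%:CC *: Q).
Proof.
move=> hQ /andP[c0 c1].
have [P [e [hP hP' eQ he]]] := effect_spec hQ.
rewrite eQ scale_diag; split.
  apply: psd_diag => k; rewrite mxE ler0c mulr_ge0 //.
  by have /andP[] := he k.
rewrite /loewner -[1%:M]scale1r -(rmorph1 (real_complex R)) sub_diag //.
apply: psd_diag => k; rewrite mxE ler0c subr_ge0.
have /andP[h0 h1] := he k; exact: mulr_ile1.
Qed.

Lemma nlog_le (x y : R) : 0 <= x -> x <= y -> (nlog y <= nlog x)%E.
Proof.
move=> x0 xy; rewrite /nlog.
case: (eqVneq x 0) => [_|xn0]; first by rewrite leey.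
have xp : 0 < x by rewrite lt_def xn0 x0.
have yp : 0 < y by apply: lt_le_trans xy.
by rewrite gt_eqF // lee_fin lerN2 ler_ln.
Qed.

Lemma cabs0 : cabs (0 : C) = 0.
Proof. by apply: (@complexI R); rewrite cabsE normr0 rmorph0. Qed.

Lemma Minf1 (M : R -> set mx) : M 0 1%:M -> Minf M 1%:M.
Proof.
move=> h e he; exists 1%:M; first by exists 0 => //=.
by move=> i j; rewrite subrr cabs0.
Qed.

Lemma SB_lb (rho Gam : mx) e : psd Gam -> 0 < e ->
  lbound [set trR (Q *m Gam) / e | Q in [set Q | effect Q /\ e <= trR (Q *m rho)]] 0.
Proof.
move=> hG he _ [Q [hQ _] <-]; apply: divr_ge0; last exact: ltW.
exact: trR_ge0 hQ.1 hG.
Qed.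

Lemma SB_ne (rho Gam : mx) e : e <= trR rho ->
  [set trR (Q *m Gam) / e | Q in [set Q | effect Q /\ e <= trR (Q *m rho)]] !=set0.
Proof.
by move=> he; exists (trR (1%:M *m Gam) / e), 1%:M => //; split; [exact: effect1 | rewrite trR1].
Qed.

Lemma SA_lb (M : R -> set mx) (rho Gam : mx) eta :
  (forall r : R, 0 <= r -> M r `<=` @effect R n) -> psd Gam -> 0 < eta ->
  lbound [set trR (Q *m Gam) / trR (Q *m rho) | Q in
              [set Q | Minf M Q /\ eta <= trR (Q *m rho)]] 0.
Proof.
move=> hM hG he _ [Q [hQ ht] <-]; apply: divr_ge0.
  exact: trR_ge0 (Minf_effect hM hQ).1 hG.
by apply: ltW; apply: lt_le_trans ht.
Qed.

Lemma SA_ne (M : R -> set mx) (rho Gam : mx) eta : M 0 1%:M -> eta <= trR rho ->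
  [set trR (Q *m Gam) / trR (Q *m rho) | Q in
              [set Q | Minf M Q /\ eta <= trR (Q *m rho)]] !=set0.
Proof.
by move=> h1 he; eexists; exists 1%:M; [split; [exact: Minf1 | rewrite trR1] | reflexivity].
Qed.

Lemma partA (M : R -> set mx) (rho Gam : mx) eta :
  (forall r : R, 0 <= r -> M r `<=` @effect R n) -> M 0 1%:M ->
  psd rho -> psd Gam -> 0 < eta -> eta <= trR rho ->
  (DHinf M eta rho Gam <= DH eta rho Gam)%E.
Proof.
move=> hM h1 hr hG he her; rewrite /DHinf /DH; apply: nlog_le.
  by apply: lb_le_inf; [exact: SB_ne | exact: SB_lb].
apply: lb_le_inf; first exact: SA_ne.
move=> _ [Q [hQ ht] <-].
have hQe := Minf_effect hM hQ.
have tp : 0 < trR (Q *m rho) by apply: lt_le_trans ht.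
set c := eta / trR (Q *m rho).
have c01 : 0 <= c <= 1.
  apply/andP; split; first by apply: divr_ge0; apply: ltW.
  by rewrite ler_pdivrMr // mul1r.
have := ge_inf (ex_intro _ 0 (SB_lb (rho := rho) hG he)); apply.
exists (c%:CC *: Q).
  split; first exact: scale_effect.
  by rewrite trRZ /c divfK ?gt_eqF.
rewrite trRZ /c; field.
by rewrite !gt_eqF.
Qed.

Lemma elog_bound (a a' q : R) : 0 <= a -> 0 <= a' ->
  (elog a' - elog a <= q%:E)%E -> a' <= expR q * a.
Proof.
move=> a0 a'0; rewrite /elog.
case: (eqVneq a' 0) => [-> _|a'n0]; first by rewrite mulr_ge0 // ltW // expR_gt0.
have a'p : 0 < a' by rewrite lt_def a'n0 a'0.
case: (eqVneq a 0) => [_|an0] /=; first by rewrite addey // leye_eq.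
have ap : 0 < a by rewrite lt_def an0 a0.
rewrite -EFinD lee_fin => h.
rewrite -(lnK a'p) -[X in _ * X](lnK ap) -expRD ler_expR.
by rewrite -lerBlDr.
Qed.

Lemma keyB (M : R -> set mx) (rho Gam Q : mx) (q eta g : R) :
  (forall r : R, 0 <= r -> M r `<=` @effect R n) ->
  psd rho -> psd Gam -> 0 < eta -> eta <= trR rho -> 0 < g < 1 ->
  quasiuniversal M q Gam -> effect Q ->
  (1 - g) * eta + g * trR rho <= trR (Q *m rho) ->
  inf [set trR (Q *m Gam) / trR (Q *m rho) | Q in
              [set Q | Minf M Q /\ eta <= trR (Q *m rho)]]
  <= expR q * (trR rho / (g * eta)) * (trR (Q *m Gam) / ((1 - g) * eta + g * trR rho)).
Proof.
move=> hM hr hG he her /andP[g0 g1] hqu hQ hQt.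
set etag := (1 - g) * eta + g * trR rho in hQt *.
have trp : 0 < trR rho by apply: lt_le_trans her.
have g1p : 0 < 1 - g by rewrite subr_gt0.
have etag_p : 0 < etag by rewrite /etag ltr_pwDr ?mulr_gt0 // mulr_ge0 // ltW.
have tQp : 0 < trR (Q *m rho) by apply: lt_le_trans hQt.
have [m [/andP[m0 m1] hQ1 hn1 hl]] := normalize hQ tQp.
have g01 : 0 < g < 1 by rewrite g0 g1.
have [Qt [Qt' [hMt hMt' l1 l2 hq]]] := hqu _ hQ1 hn1 g g01.
have et := Minf_effect hM hMt.
have et' := Minf_effect hM hMt'.
set a := trR (Qt *m Gam).
set a' := trR (Qt' *m Gam).
set T := trR (Q *m Gam).
set t' := trR (Qt' *m rho).
have a0 : 0 <= a := trR_ge0 et.1 hG.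
have a'0 : 0 <= a' := trR_ge0 et'.1 hG.
have T0 : 0 <= T := trR_ge0 hQ.1 hG.
have ha' := elog_bound a0 a'0 hq.
have h2 := loewner_trR l2 hr.
rewrite trRD !trRZ trR1 -/t' in h2.
have h1 := loewner_trR l1 hG.
rewrite !trRZ -/a -/T in h1.
have hlm := loewner_trR hl hr.
rewrite trRZ trR1 in hlm.
have tQ1 : trR (Q *m rho) <= m^-1 * trR (Q *m rho).
  by rewrite ler_peMl ?(ltW tQp) ?invf_ge1.
have ht' : eta <= t'.
  have : (1 - g) * eta <= (1 - g) * t'.
    rewrite -(lerD2r (g * trR rho)) -/etag.
    apply: le_trans hQt _; apply: le_trans tQ1 _.
    exact: h2.
  by rewrite ler_pM2l.
have t'p : 0 < t' by apply: lt_le_trans ht'.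
have hinf : inf [set trR (Q *m Gam) / trR (Q *m rho) | Q in
              [set Q | Minf M Q /\ eta <= trR (Q *m rho)]] <= a' / t'.
  have := ge_inf (ex_intro _ 0 (SA_lb (rho := rho) hM hG he)); apply.
  by exists Qt'.
apply: le_trans hinf _.
have ha : a <= m^-1 * T / g by rewrite ler_pdivlMr // mulrC.
have him : m^-1 <= trR rho / etag.
  rewrite ler_pdivlMr // ler_pdivrMl //.
  by apply: le_trans hQt hlm.
have ie0 : 0 <= eta^-1 by rewrite invr_ge0 ltW.
have ig0 : 0 <= g^-1 by rewrite invr_ge0 ltW.
have E0 : 0 <= expR q by rewrite ltW // expR_gt0.
apply: le_trans (_ : a' / eta <= _).
  by rewrite ler_wpM2l // lef_pV2 // posrE.
apply: le_trans (_ : expR q * a / eta <= _).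
  by rewrite ler_wpM2r.
apply: le_trans (_ : expR q * (m^-1 * T / g) / eta <= _).
  by rewrite ler_wpM2r // ler_wpM2l.
apply: le_trans (_ : expR q * (trR rho / etag * T / g) / eta <= _).
  by rewrite ler_wpM2r // ler_wpM2l // ler_wpM2r // ler_wpM2r.
rewrite le_eqVlt; apply/orP; left; apply/eqP.
by field; rewrite !gt_eqF.
Qed.

Lemma partB (M : R -> set mx) (rho Gam : mx) (q eta g : R) :
  (forall r : R, 0 <= r -> M r `<=` @effect R n) -> M 0 1%:M ->
  psd rho -> psd Gam -> 0 < eta -> eta <= trR rho -> 0 < g < 1 ->
  quasiuniversal M q Gam ->
  (DH ((1 - g) * eta + g * trR rho) rho Gam - q%:E - (ln (trR rho / (g * eta)))%:E
     <= DHinf M eta rho Gam)%E.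
Proof.
move=> hM h1 hr hG he her hg hqu.
have /andP[g0 g1] := hg.
set etag := (1 - g) * eta + g * trR rho.
have trp : 0 < trR rho by apply: lt_le_trans her.
have g1p : 0 < 1 - g by rewrite subr_gt0.
have etag_p : 0 < etag by rewrite /etag ltr_pwDr ?mulr_gt0 // mulr_ge0 // ltW.
have etag_le : etag <= trR rho.
  have -> : trR rho = (1 - g) * trR rho + g * trR rho by rewrite -mulrDl subrK mul1r.
  by rewrite /etag lerD2r ler_wpM2l // ltW.
rewrite /DHinf /DH.
set x := inf _; set y := inf _.
set L := trR rho / (g * eta).
have Lp : 0 < L by rewrite divr_gt0 // mulr_gt0.
have Cp : 0 < expR q * L by rewrite mulr_gt0 // expR_gt0.
have y0 : 0 <= y by apply: lb_le_inf; [exact: SA_ne | exact: SA_lb].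
have x0 : 0 <= x by apply: lb_le_inf; [exact: SB_ne | exact: SB_lb].
have yx : y <= expR q * L * x.
  rewrite -ler_pdivrMl //; apply: lb_le_inf; first exact: SB_ne.
  move=> _ [Q [hQ hQt] <-]; rewrite ler_pdivrMl //.
  exact: keyB.
rewrite /nlog.
case: (eqVneq y 0) => [_|yn0]; first by rewrite leey.
have yp : 0 < y by rewrite lt_def yn0 y0.
have xp : 0 < x.
  rewrite lt_def x0 andbT; apply/eqP => xz.
  by move: yx; rewrite xz mulr0 => /(lt_le_trans yp); rewrite ltxx.
rewrite gt_eqF // -!EFinB lee_fin.
have hln : ln y <= ln (expR q * L * x) by rewrite ler_ln // posrE mulr_gt0.
clearbody L.
have hE : ln (expR q * L * x) = q + ln L + ln x.
  rewrite lnM ?posrE ?mulr_gt0 ?expR_gt0 //.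
  by rewrite lnM ?posrE ?expR_gt0 // expRK.
rewrite hE in hln; lra.
Qed.

Lemma ereal_aux (X Y : \bar R) (a b : R) :
  (X - a%:E - b%:E <= Y)%E -> (- Y <= - X + a%:E + b%:E)%E.
Proof.
case: X => [r| |]; case: Y => [s| |] //=; rewrite ?lee_fin ?leNye ?leey //.
by move=> h; lra.
Qed.

End Main.

Unset Implicit Arguments. Set Strict Implicit.

Theorem theoremI3 (R : realType) (n : nat) (M : R -> set 'M[R[i]]_n)
  (rho Gam : 'M[R[i]]_n) (q eta g : R) :
  (forall r : R, 0 <= r -> M r `<=` @effect R n) ->
  M 0 1%:M ->
  (forall r r' : R, 0 <= r -> r <= r' -> M r `<=` M r') ->
  subnormalized rho -> psd Gam ->
  0 <= q -> 0 < eta -> eta <= trR rho -> 0 < g < 1 ->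
  let eta_g := (1 - g) * eta + g * trR rho in
  (quasiuniversal M q Gam ->
     (DHinf M eta rho Gam <= DH eta rho Gam)%E /\
     (DH eta_g rho Gam - q%:E - (ln (trR rho / (g * eta)))%:E
        <= DHinf M eta rho Gam)%E) /\
  (quasiuniversal M q 1%:M ->
     (HH eta rho <= HHinf M eta rho)%E /\
     (HHinf M eta rho <= HH eta_g rho + q%:E + (ln (trR rho / (g * eta)))%:E)%E).
Proof.
move=> hM h1 _ [hr _] hG q0 he her hg eta_g; split.
  move=> hqu; split; first exact: partA.
  exact: partB.
move=> hqu; split.
  by rewrite /HH /HHinf leeN2; apply: partA => //; exact: psd1.
rewrite /HH /HHinf; apply: ereal_aux.
by apply: partB => //; exact: psd1.
Qed.
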